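(* Let $k,l$ be positive integers, let $G$ be a $k$-degenerate graph and $H$ an $l$-degenerate graph. Then $AT(G+_R H)\le k+l+1$.
   Context: A graph is $k$-degenerate if its vertices can be successively deleted so that each deleted vertex has degree at most $k$ at the time of deletion. For an orientation $D$, a subdigraph is Eulerian if every vertex has equal in- and outdegree in it; $D$ is an AT-orientation if the numbers of Eulerian subgraphs with an even and with an odd number of arcs differ; $AT(G)$ is the smallest $k$ such that $G$ has an AT-orientation of maximum outdegree at most $k-1$. $R(G)$ has vertex set $V(G)\cup E(G)$ and consists of $G$ together with, for each edge $e=xy$, a new vertex $e$ adjacent to $x$ and $y$. $G+_R H$ has vertex set $(V(G)\cup E(G))\times V(H)$, with $(u_1,u_2)\sim(v_1,v_2)$ iff [$u_1=v_1\in V(G)$ and $u_2v_2\in E(H)$] or [$u_2=v_2$ and $u_1v_1\in E(R(G))$]. *)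

(* Defs.v *)
(* Finite simple graphs are given as a relation g : rel V on a
   finType V (assumed symmetric and irreflexive in the theorem). *)
From mathcomp Require Import all_boot.
Set Implicit Arguments.
Unset Strict Implicit.
Unset Printing Implicit Defensive.

Section Graphs.
Variable V : finType.
Implicit Types (g : rel V) (D A : {set V * V}).

(* k-degenerate: an ordering of all vertices (the deletion order) such that
   each vertex, when deleted, has at most k neighbours among the vertices
   still present (i.e. those deleted later). *)
Definition degenerate g (k : nat) : Prop :=
  exists s : seq V, perm_eq s (enum V) /\
    forall s1 x s2, s = s1 ++ x :: s2 -> count (g x) s2 <= k.

Definition orientation g D : bool :=
  [forall x, forall y,
     (((x, y) \in D) ==> g x y) &&
     (g x y ==> (((x, y) \in D) (+) ((y, x) \in D)))].

Definition outdeg D (v : V) : nat := #|[set w | (v, w) \in D]|.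
Definition indeg D (v : V) : nat := #|[set w | (w, v) \in D]|.

Definition eulerian_sub D A : bool :=
  (A \subset D) && [forall v, outdeg A v == indeg A v].

Definition EE D : nat := #|[set A | eulerian_sub D A & ~~ odd #|A|]|.
Definition EO D : nat := #|[set A | eulerian_sub D A & odd #|A|]|.

Definition AT_orientation g D : bool := orientation g D && (EE D != EO D).

Definition AT_prop g (k : nat) : bool :=
  [exists D, AT_orientation g D && [forall v, outdeg D v < k]].

(* existence: the acyclic orientation by enum_rank *)
Definition D0 g : {set V * V} :=
  [set p | g p.1 p.2 && (enum_rank p.1 < enum_rank p.2)].

Lemma D0_eulerian_empty g A : eulerian_sub (D0 g) A -> A = set0.
Proof.
case/andP=> sub /forallP eul.
apply/eqP; apply/negPn/negP=> /set0Pn [p0 p0A].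
have [p pA pmax] : exists2 p, p \in A & forall q, q \in A -> enum_rank q.2 <= enum_rank p.2.
  by case: (arg_maxnP (fun q : V * V => (enum_rank q.2 : nat)) p0A) => q qA qm; exists q => // r rA; exact: qm.
have : indeg A p.2 != 0.
  by rewrite /indeg cards_eq0; apply/set0Pn; exists p.1; rewrite inE -surjective_pairing.
rewrite -(eqP (eul p.2)) /outdeg cards_eq0 => /set0Pn [w]; rewrite inE => wA.
have := subsetP sub _ wA; rewrite inE /= => /andP [_ lt].
by have := pmax _ wA; rewrite /= leqNgt lt.
Qed.

Lemma AT_prop_simple g : symmetric g -> irreflexive g -> AT_prop g #|V|.+1.
Proof.
move=> gsym girr.
apply/existsP; exists (D0 g); apply/andP; split.
  apply/andP; split.
    apply/forallP=> x; apply/forallP=> y; apply/andP; split.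
      by apply/implyP; rewrite inE => /andP [].
    apply/implyP=> gxy; rewrite !inE /= gxy -gsym gxy /=.
    have nxy : x != y by apply/eqP=> exy; move: gxy; rewrite exy girr.
    have : enum_rank x != enum_rank y by rewrite (inj_eq enum_rank_inj).
    by rewrite neq_ltn; case/orP=> h; rewrite h ?(ltnW h) // ltnNge (ltnW h).
  have E : [set A | eulerian_sub (D0 g) A] = [set set0].
    apply/setP=> A; rewrite !inE; apply/idP/eqP; first exact: D0_eulerian_empty.
    move=> ->; rewrite /eulerian_sub sub0set /=; apply/forallP=> v.
    by rewrite /outdeg /indeg; apply/eqP; apply: eq_card => w; rewrite !inE.
  have -> : EO (D0 g) = 0.
    apply/eqP; rewrite /EO cards_eq0; apply/eqP/setP=> A; rewrite !inE.
    apply/negbTE/negP=> /andP [/D0_eulerian_empty -> ]; by rewrite cards0.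
  have e0 : set0 \in [set A | eulerian_sub (D0 g) A] by rewrite E set11.
  rewrite /EE -lt0n card_gt0; apply/set0Pn; exists set0.
  by rewrite !inE cards0 andbT; rewrite inE in e0.
by apply/forallP=> v; rewrite ltnS max_card.
Qed.

(* AT(G): the smallest k such that G has an AT-orientation of maximum
   outdegree at most k-1.  Such a k exists iff AT_prop g #|V|.+1 holds (every
   outdegree is at most #|V|); this is always the case for simple graphs
   (AT_prop_simple).  The fallback value 0 is never used for simple graphs. *)
Definition AT g : nat :=
  match AT_prop g #|V|.+1 =P true with
  | ReflectT H => ex_minn (ex_intro (AT_prop g) #|V|.+1 H)
  | ReflectF _ => 0
  end.

End Graphs.

Section Constructions.
Variables (V W : finType) (g : rel V) (h : rel W).

(* edges of G, identified with 2-element vertex sets {x, y} with xy in E(G) *)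
Definition is_edge (s : {set V}) : bool :=
  [exists x, exists y, g x y && (s == [set x; y])].
Definition edge_of : Type := {s : {set V} | is_edge s}.

(* vertex set V(G) u E(G) of R(G) *)
Definition RV : finType := (V + edge_of)%type.

Definition Rrel : rel RV := fun a b =>
  match a, b with
  | inl x, inl y => g x y
  | inl x, inr e => x \in val e
  | inr e, inl x => x \in val e
  | inr _, inr _ => false
  end.

Definition is_vertex (a : RV) : bool := if a is inl _ then true else false.

Definition Rprod : rel (RV * W) := fun u v =>
  [&& u.1 == v.1, is_vertex u.1 & h u.2 v.2] || ((u.2 == v.2) && Rrel u.1 v.1).

End Constructions.

Arguments is_edge {V} g s.
Arguments edge_of {V} g.
Arguments RV {V} g.
Arguments Rrel {V} g a b.
Arguments Rprod {V W} g h u v.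

(* Main.v *)
Require Import Defs.
From mathcomp Require Import all_boot.

Lemma degen_rank (V : finType) (g : rel V) (k : nat) :
  degenerate g k -> exists f : V -> nat, [/\ injective f, forall x, f x < #|V| &
     forall x, #|[set y | g x y & f x < f y]| <= k].
Proof.
case=> s [ps dg].
have sall : forall x, x \in s by move=> x; rewrite (perm_mem ps) mem_enum.
have us : uniq s by rewrite (perm_uniq ps) enum_uniq.
exists (index ^~ s); split.
- by move=> x y; apply: (index_inj x) => //; apply: sall.
- by move=> x; rewrite cardE -(perm_size ps) index_mem.
move=> x; have sx := sall x; case/splitPr: sx us dg sall => s1 s2 us dg sall.
have := dg s1 x s2 erefl.
have xs1 : x \notin s1.
  by move: us; rewrite cat_uniq /= => /and3P [_ /norP [/negP ? _] _]; apply/negP.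
have ix : index x (s1 ++ x :: s2) = size s1 by rewrite index_cat (negbTE xs1) /= eqxx addn0.
apply: leq_trans; apply: eq_leq.
have u2 : uniq [seq y <- s2 | g x y].
  by apply: filter_uniq; move: us; rewrite cat_uniq /= => /and4P [_ _ _ ?].
rewrite -size_filter -(card_uniqP u2); apply: eq_card => y.
rewrite !inE mem_filter ix index_cat.
case: ifP => ys1.
  rewrite ltnNge index_size /= andbF.
  case: (boolP (y \in s2)) => ys2; last by rewrite andbF.
  move: us; rewrite cat_uniq => /and3P [_ /hasPn /(_ y) H _].
  by move: H; rewrite inE ys2 orbT ys1 => /(_ isT).
rewrite -{1}[size s1]addn0 ltn_add2l /=.
case: (x =P y) => [<-|ny] /=.
  by rewrite ltnn andbF; move: us; rewrite cat_uniq /= => /and4P [_ _ /negbTE -> _]; rewrite andbF.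
have : y \in s1 ++ x :: s2 by apply: sall.
rewrite mem_cat ys1 inE /=; case/orP=> [/eqP e|->]; last by rewrite andbT.
by case: ny.
Qed.

Section Rank.
Variables (T : finType) (r : rel T) (f : T -> nat).
Hypotheses (finj : injective f) (rsym : symmetric r) (rirr : irreflexive r).

Definition Df : {set T * T} := [set p | r p.1 p.2 && (f p.1 < f p.2)].

Lemma Df_eulerian_empty A : eulerian_sub Df A -> A = set0.
Proof.
case/andP=> sub /forallP eul.
apply/eqP; apply/negPn/negP=> /set0Pn [p0 p0A].
have [p pA pmax] : exists2 p, p \in A & forall q, q \in A -> f q.2 <= f p.2.
  by case: (arg_maxnP (fun q : T * T => f q.2) p0A) => q qA qm; exists q => // r' rA; exact: qm.
have : indeg A p.2 != 0.
  by rewrite /indeg cards_eq0; apply/set0Pn; exists p.1; rewrite inE -surjective_pairing.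
rewrite -(eqP (eul p.2)) /outdeg cards_eq0 => /set0Pn [w]; rewrite inE => wA.
have := subsetP sub _ wA; rewrite inE /= => /andP [_ lt].
by have := pmax _ wA; rewrite /= leqNgt lt.
Qed.

Lemma rank_AT {m} : (forall x, #|[set y | r x y & f x < f y]| <= m) -> AT_prop r m.+1.
Proof.
move=> bnd.
apply/existsP; exists Df; apply/andP; split.
  apply/andP; split.
    apply/forallP=> x; apply/forallP=> y; apply/andP; split.
      by apply/implyP; rewrite inE => /andP [].
    apply/implyP=> gxy; rewrite !inE /= gxy -rsym gxy /=.
    have nxy : x != y by apply/eqP=> exy; move: gxy; rewrite exy rirr.
    have : f x != f y by rewrite (inj_eq finj).
    by rewrite neq_ltn; case/orP=> h; rewrite h ?(ltnW h) // ltnNge (ltnW h).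
  have E : [set A | eulerian_sub Df A] = [set set0].
    apply/setP=> A; rewrite !inE; apply/idP/eqP; first exact: Df_eulerian_empty.
    move=> ->; rewrite /eulerian_sub sub0set /=; apply/forallP=> v.
    by rewrite /outdeg /indeg; apply/eqP; apply: eq_card => w; rewrite !inE.
  have -> : EO Df = 0.
    apply/eqP; rewrite /EO cards_eq0; apply/eqP/setP=> A; rewrite !inE.
    apply/negbTE/negP=> /andP [/Df_eulerian_empty -> ]; by rewrite cards0.
  have e0 : set0 \in [set A | eulerian_sub Df A] by rewrite E set11.
  rewrite /EE -lt0n card_gt0; apply/set0Pn; exists set0.
  by rewrite !inE cards0 andbT; rewrite inE in e0.
apply/forallP=> v; rewrite ltnS; apply: leq_trans (bnd v).
by apply: eq_leq; apply: eq_card => w; rewrite !inE.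
Qed.

Lemma rank_ATle m : (forall x, #|[set y | r x y & f x < f y]| <= m) -> AT r <= m.+1.
Proof.
move=> bnd; rewrite /AT; case: (AT_prop r #|T|.+1 =P true) => // H.
by case: ex_minnP => n _ /(_ _ (rank_AT bnd)).
Qed.
End Rank.

Section Main.
Variables (V W : finType) (g : rel V) (h : rel W).
Hypotheses (gsym : symmetric g) (girr : irreflexive g) (hsym : symmetric h) (hirr : irreflexive h).

Lemma Rrel_sym : symmetric (Rrel g).
Proof. by case=> [x|e] [y|e'] //=; rewrite gsym. Qed.

Lemma Rprod_sym : symmetric (Rprod g h).
Proof.
move=> [a w] [b w']; rewrite /Rprod /= Rrel_sym (eq_sym a) (eq_sym w).
by case: eqP => [->|] //=; rewrite hsym.
Qed.

Lemma Rprod_irr : irreflexive (Rprod g h).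
Proof. by move=> [[x|e] w]; rewrite /Rprod /= ?eqxx /= ?hirr ?girr. Qed.

Variables (fg : V -> nat) (fh : W -> nat).
Hypotheses (fginj : injective fg) (fhinj : injective fh) (fhlt : forall w, fh w < #|W|).

Definition F (p : RV g * W) : nat :=
  match p with
  | (inl v, w) => #|{: RV g * W}| + (fg v * #|W| + fh w)
  | (inr _, _) => enum_rank p
  end.

Lemma F_inj : injective F.
Proof.
move=> [[v|e] w] [[v'|e'] w'] /=.
- move/addnI=> E.
  have Ew : fh w = fh w'.
    by have := congr1 (modn^~ #|W|) E; rewrite !modnMDl !modn_small.
  rewrite Ew in E; move/addIn: E => E.
  have W0 : 0 < #|W| by apply: leq_ltn_trans (fhlt w).
  by move/eqP: E; rewrite eqn_pmul2r // => /eqP /fginj ->; rewrite (fhinj _ _ Ew).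
- by move=> E; have := ltn_ord (enum_rank ((inr e', w') : RV g * W)); rewrite -E ltnNge leq_addr.
- by move=> E; have := ltn_ord (enum_rank ((inr e, w) : RV g * W)); rewrite E ltnNge leq_addr.
- by move/ord_inj/enum_rank_inj.
Qed.

Variables (k l : nat).
Hypotheses (k0 : 0 < k) (l0 : 0 < l)
  (fgb : forall x, #|[set y | g x y & fg x < fg y]| <= k)
  (fhb : forall x, #|[set y | h x y & fh x < fh y]| <= l).

Lemma F_bound p : #|[set q | Rprod g h p q & F p < F q]| <= k + l.
Proof.
case: p => [[v|e] w].
- pose SG := [set y | g v y & fg v < fg y].
  pose SH := [set y | h w y & fh w < fh y].
  have W0 : 0 < #|W| by apply: leq_ltn_trans (fhlt w).
  have sub : [set q | Rprod g h (inl v, w) q & F (inl v, w) < F q] \subset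
     ((fun v' => ((inl v', w) : RV g * W)) @: SG) :|: ((fun w' => ((inl v, w') : RV g * W)) @: SH).
    apply/subsetP=> [[[v'|e'] w']]; rewrite !inE /=.
      rewrite ltn_add2l /Rprod /=.
      case/andP=> /orP [/andP [/eqP [<-] hww]|/andP [/eqP <- gvv]] lt.
        apply/orP; right; apply/imsetP; exists w' => //; rewrite inE hww /=.
        by move: lt; rewrite ltn_add2l.
      apply/orP; left; apply/imsetP; exists v' => //; rewrite inE gvv /=.
      by move: lt; rewrite ltn_add2r ltn_pmul2r.
    case/andP=> _ lt; exfalso; move: lt.
    by rewrite ltnNge (leq_trans (ltnW (ltn_ord (enum_rank ((inr e', w') : RV g * W))))) // leq_addr.
  apply: leq_trans (subset_leq_card sub) _.
  rewrite cardsU; apply: leq_trans (leq_subr _ _) _.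
  apply: leq_add; apply: leq_trans (leq_imset_card _ _) _; [exact: fgb | exact: fhb].
- have sub : [set q | Rprod g h (inr e, w) q & F (inr e, w) < F q] \subset
     [set ((inl a, w) : RV g * W) | a in val e].
    apply/subsetP=> [[[a|e'] w']]; rewrite !inE /Rprod /= ?andbF /=.
    case/andP=> /andP [/eqP <- ae] _; apply/imsetP; exists a => //.
    by [].
  apply: leq_trans (subset_leq_card sub) _.
  apply: leq_trans (leq_imset_card _ _) _.
  have := valP e; case/existsP=> x /existsP [y] /andP [_ /eqP ->].
  rewrite cards2; apply: leq_trans (_ : 2 <= k + l); first by case: (x != y).
  by rewrite -(addn1 1) leq_add.
Qed.
End Main.

Theorem corollary3p6 (V W : finType) (g : rel V) (h : rel W) (k l : nat) :
  0 < k -> 0 < l ->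
  symmetric g -> irreflexive g ->
  symmetric h -> irreflexive h ->
  degenerate g k -> degenerate h l ->
  AT (Rprod g h) <= k + l + 1.
Proof.
move=> k0 l0 gsym girr hsym hirr dg dh.
case: (degen_rank _ _ _ dg) => fg [fginj _ fgb].
case: (degen_rank _ _ _ dh) => fh [fhinj fhlt fhb].
rewrite addn1.
apply: rank_ATle; last first.
- by move=> p; apply: (@F_bound V W g h fg fh fhlt k l).
- by move=> x; apply: Rprod_irr.
- by move=> x y; apply: Rprod_sym.
- by move=> x y; apply: F_inj.
Qed.
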